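(* Let $n\geqslant 4$ and let $S$ be an independent set of vertices of the alternating group graph $AG_n$. (1) If $|S|=3$, then $|N(S)|\geqslant 6n-16$. (2) If $|S|=4$, then $|N(S)|\geqslant 8n-24$.
   Context: For $n\geqslant 3$, permutations $p=p_1\cdots p_n$ of $\{1,\dots,n\}$ are written as words; $\mathcal A_n$ is the set of even permutations. For $3\leqslant i\leqslant n$, $p\,\mathrm{g}_i^+$ is obtained from $p$ by placing $p_i,p_1,p_2$ at positions $1,2,i$ respectively (others unchanged), and $p\,\mathrm{g}_i^-$ by placing $p_2,p_i,p_1$ at positions $1,2,i$. $AG_n$ has vertex set $\mathcal A_n$, with $p,q$ adjacent iff $q\in\{p\mathrm{g}_i^+,p\mathrm{g}_i^-\}$ for some $i\in\{3,\dots,n\}$. For a vertex set $S$, $N(S)$ is the set of vertices not in $S$ adjacent to at least one vertex of $S$. *)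

(* Defs.v *)
From mathcomp Require Import all_boot all_fingroup.
Set Implicit Arguments. Unset Strict Implicit. Unset Printing Implicit Defensive.

(* A permutation p of {0,...,n-1} (relabelling of {1,...,n}) is read as the
   word p(0) p(1) ... p(n-1); position a has value 0, b value 1 and
   k value i-1 (so 2 <= k <= n-1, i.e. 3 <= i <= n). *)

Definition gplus n (p : {perm 'I_n}) (a b k j : 'I_n) : 'I_n :=
  if j == a then p k else if j == b then p a else if j == k then p b else p j.

Definition gminus n (p : {perm 'I_n}) (a b k j : 'I_n) : 'I_n :=
  if j == a then p b else if j == b then p k else if j == k then p a else p j.

Definition AGadj n (p q : {perm 'I_n}) : bool :=
  [exists k : 'I_n, exists a : 'I_n, exists b : 'I_n,
    [&& val a == 0, val b == 1, 2 <= val k &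
       [forall j, q j == gplus p a b k j] || [forall j, q j == gminus p a b k j]]].

Definition AGvert n : {set {perm 'I_n}} := [set p : {perm 'I_n} | ~~ odd_perm p].

Definition AGindependent n (S : {set {perm 'I_n}}) : bool :=
  (S \subset AGvert n) && [forall p in S, forall q in S, ~~ AGadj p q].

Definition AGnbhd n (S : {set {perm 'I_n}}) : {set {perm 'I_n}} :=
  [set q in AGvert n | (q \notin S) && [exists p in S, AGadj p q]].

(* Main.v *)
Require Import Defs.
From mathcomp Require Import all_boot all_fingroup.
From mathcomp Require Import zify.
Set Implicit Arguments. Unset Strict Implicit. Unset Printing Implicit Defensive.

Lemma cardsum (T : finType) (A : {set T}) : #|A| = \sum_x (x \in A : nat).
Proof. by rewrite -sum1_card big_mkcond; apply: eq_bigr => x _; case: (x \in A). Qed.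

Lemma IE3 (T : finType) (A B C : {set T}) :
  #|A :|: B :|: C| + #|A :&: B| + #|A :&: C| + #|B :&: C| =
  #|A| + #|B| + #|C| + #|A :&: B :&: C|.
Proof.
rewrite !cardsum -!big_split; apply: eq_bigr => x _; rewrite !inE.
by case: (x \in A); case: (x \in B); case: (x \in C).
Qed.

Lemma arith (A B C U pab pac pbc t : nat) : U + pab + pac + pbc = A + B + C + t ->
  pab <= 2 -> pac <= 2 -> pbc <= 2 -> pab + pac + pbc <= 4 + t -> A + B + C <= U + 4.
Proof. lia. Qed.
Lemma ar1 (x y z t : nat) : x <= 2 -> y <= 2 -> z <= 1 -> (0 < z -> 0 < t) -> x + y + z <= 4 + t.
Proof. move=> h1 h2 h3 H; case: (posnP z) => [->|z0]; [lia | have := H z0; lia]. Qed.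
Lemma ar2 (x y z t : nat) : x <= 1 -> y <= 1 -> z <= 2 -> x + y + z <= 4 + t.
Proof. lia. Qed.

Lemma ar2a (x y z t : nat) : x <= 2 -> y <= 1 -> z <= 1 -> x + y + z <= 4 + t.
Proof. lia. Qed.
Lemma ar2b (x y z t : nat) : x <= 1 -> y <= 2 -> z <= 1 -> x + y + z <= 4 + t.
Proof. lia. Qed.

Lemma ar1x (x y z t : nat) : x <= 1 -> y <= 2 -> z <= 2 -> (0 < x -> 0 < t) -> x + y + z <= 4 + t.
Proof. move=> h1 h2 h3 H; case: (posnP x) => [->|z0]; [lia | have := H z0; lia]. Qed.

Fact Nb_key : unit. Proof. exact: tt. Qed.

Section AG.
Variable n : nat.
Variables a0 b0 : 'I_n.
Hypothesis Ha : val a0 = 0.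
Hypothesis Hb : val b0 = 1.

Lemma ab : a0 != b0.
Proof. by apply/eqP => E; move: Hb; rewrite -E Ha. Qed.
Lemma ba : b0 != a0.
Proof. by rewrite eq_sym ab. Qed.
Lemma big_a (m : 'I_n) : 2 <= m -> m != a0.
Proof. by move=> H; apply/eqP => E; move: H; rewrite E Ha. Qed.
Lemma big_b (m : 'I_n) : 2 <= m -> m != b0.
Proof. by move=> H; apply/eqP => E; move: H; rewrite E Hb. Qed.

Definition rotP (v : {perm 'I_n}) (m : 'I_n) : {perm 'I_n} := (tperm b0 m * tperm a0 m * v)%g.
Definition rotM (v : {perm 'I_n}) (m : 'I_n) : {perm 'I_n} := (tperm a0 m * tperm b0 m * v)%g.

Section Vals.
Variables (v : {perm 'I_n}) (m : 'I_n).
Hypothesis Hm : 2 <= m.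
Let ma := big_a Hm.
Let mb := big_b Hm.
Let am : a0 != m. Proof. by rewrite eq_sym. Qed.
Let bm : b0 != m. Proof. by rewrite eq_sym. Qed.

Lemma rotPa : rotP v m a0 = v m.
Proof. by rewrite !permM (tpermD ba ma) tpermL. Qed.
Lemma rotPb : rotP v m b0 = v a0.
Proof using Hm ma mb am bm. by rewrite !permM tpermL tpermR. Qed.
Lemma rotPm : rotP v m m = v b0.
Proof. by rewrite !permM tpermR (tpermD ab mb). Qed.
Lemma rotPo (j : 'I_n) : j != a0 -> j != b0 -> j != m -> rotP v m j = v j.
Proof using Hm ma mb am bm. by move=> ja jb jm; rewrite !permM !tpermD // eq_sym. Qed.
Lemma rotMa : rotM v m a0 = v b0.
Proof using Hm ma mb am bm. by rewrite !permM tpermL tpermR. Qed.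
Lemma rotMb : rotM v m b0 = v m.
Proof. by rewrite !permM (tpermD ab mb) tpermL. Qed.
Lemma rotMm : rotM v m m = v a0.
Proof. by rewrite !permM tpermR (tpermD ba ma). Qed.
Lemma rotMo (j : 'I_n) : j != a0 -> j != b0 -> j != m -> rotM v m j = v j.
Proof using Hm ma mb am bm. by move=> ja jb jm; rewrite !permM !tpermD // eq_sym. Qed.
End Vals.

Definition Rot (v x : {perm 'I_n}) (m : 'I_n) := 2 <= m /\ (x = rotP v m \/ x = rotM v m).

Lemma gplusE v (m j : 'I_n) : 2 <= m -> gplus v a0 b0 m j = rotP v m j.
Proof.
move=> Hk; rewrite /gplus.
have [->|ja] := eqVneq j a0; first by rewrite rotPa.
have [->|jb] := eqVneq j b0; first by rewrite rotPb.
have [->|jm] := eqVneq j m; first by rewrite rotPm.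
by rewrite rotPo.
Qed.
Lemma gminusE v (m j : 'I_n) : 2 <= m -> gminus v a0 b0 m j = rotM v m j.
Proof.
move=> Hk; rewrite /gminus.
have [->|ja] := eqVneq j a0; first by rewrite rotMa.
have [->|jb] := eqVneq j b0; first by rewrite rotMb.
have [->|jm] := eqVneq j m; first by rewrite rotMm.
by rewrite rotMo.
Qed.

Lemma AGadjP (v x : {perm 'I_n}) : AGadj v x <-> exists m, Rot v x m.
Proof.
split.
  case/existsP => k /existsP [a /existsP [b /and4P [/eqP ea /eqP eb Hk H]]].
  have ea' : a = a0 by apply: val_inj; rewrite /= ea Ha.
  have eb' : b = b0 by apply: val_inj; rewrite /= eb Hb.
  subst a b.
  exists k; split => //.
  by case/orP: H => /forallP H; [left|right]; apply/permP => j; rewrite (eqP (H j)) ?gplusE ?gminusE.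
case=> k [Hk H]; apply/existsP; exists k; apply/existsP; exists a0; apply/existsP; exists b0.
rewrite Ha Hb !eqxx Hk /=.
by case: H => ->; [apply/orP; left|apply/orP; right]; apply/forallP => j; rewrite ?gplusE ?gminusE.
Qed.

Lemma Rot_ge2 (v x : {perm 'I_n}) (m : 'I_n) : Rot v x m -> 2 <= m.
Proof. by case. Qed.

Lemma rot_off (v x : {perm 'I_n}) (m j : 'I_n) : Rot v x m -> j != a0 -> j != b0 -> j != m -> x j = v j.
Proof. by case=> Hm [->|->] ja jb jm; rewrite ?rotPo ?rotMo. Qed.

Lemma rot_at (v x : {perm 'I_n}) (m : 'I_n) : Rot v x m -> x m = v b0 \/ x m = v a0.
Proof. by case=> Hm [->|->]; [left; rewrite rotPm | right; rewrite rotMm]. Qed.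

Lemma rot_src (v x : {perm 'I_n}) (m : 'I_n) : Rot v x m -> v m = x a0 \/ v m = x b0.
Proof. by case=> Hm [->|->]; [left; rewrite rotPa | right; rewrite rotMb]. Qed.

Lemma rot_det (v x y : {perm 'I_n}) (m : 'I_n) : Rot v x m -> Rot v y m -> x m = y m -> x = y.
Proof.
case=> Hm [->|->] [_ [->|->]] //;
  rewrite ?(@rotPm _ m Hm) ?(@rotMm _ m Hm) => /perm_inj E;
  by move: ab; rewrite E eqxx.
Qed.

Lemma rot_tri (v w x : {perm 'I_n}) (m : 'I_n) : Rot v x m -> Rot w x m -> v = w \/ Rot v w m.
Proof.
case=> Hm [->|->] [_ [E|E]].
- by left; move: E; rewrite /rotP => /mulgI.
- right; split => //; right; apply/permP => j.
  have E' := fun j => congr1 (fun f : {perm 'I_n} => f j) E; simpl in E'.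
  have [->|ja] := eqVneq j a0.
    by have := E' m; rewrite (@rotPm v m Hm) (@rotMm w m Hm) (@rotMa v m Hm) => ->.
  have [->|jb] := eqVneq j b0.
    by have := E' a0; rewrite (@rotPa v m Hm) (@rotMa w m Hm) (@rotMb v m Hm) => ->.
  have [->|jm] := eqVneq j m.
    by have := E' b0; rewrite (@rotPb v m Hm) (@rotMb w m Hm) (@rotMm v m Hm) => ->.
  by have := E' j; rewrite (@rotPo v m Hm) // (@rotMo w m Hm) // (@rotMo v m Hm) // => ->.
- right; split => //; left; apply/permP => j.
  have E' := fun j => congr1 (fun f : {perm 'I_n} => f j) E; simpl in E'.
  have [->|ja] := eqVneq j a0.
    by have := E' b0; rewrite (@rotMb v m Hm) (@rotPb w m Hm) (@rotPa v m Hm) => ->.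
  have [->|jb] := eqVneq j b0.
    by have := E' m; rewrite (@rotMm v m Hm) (@rotPm w m Hm) (@rotPb v m Hm) => ->.
  have [->|jm] := eqVneq j m.
    by have := E' a0; rewrite (@rotMa v m Hm) (@rotPa w m Hm) (@rotPm v m Hm) => ->.
  by have := E' j; rewrite (@rotMo v m Hm) // (@rotPo w m Hm) // (@rotPo v m Hm) // => ->.
- by left; move: E; rewrite /rotM => /mulgI.
Qed.

Lemma rot_even (v x : {perm 'I_n}) (m : 'I_n) : Rot v x m -> odd_perm x = odd_perm v.
Proof.
have H1 := ba; case=> Hm [->|->]; rewrite /rotP /rotM !odd_permM !odd_tperm.
  by rewrite eq_sym (big_b Hm) eq_sym (big_a Hm).
by rewrite eq_sym (big_a Hm) eq_sym (big_b Hm).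
Qed.


Definition Nb (v : {perm 'I_n}) : {set {perm 'I_n}} := locked_with Nb_key [set x | AGadj v x].

Lemma NbE (v x : {perm 'I_n}) : (x \in Nb v) = AGadj v x.
Proof. by rewrite /Nb locked_withE inE. Qed.

Lemma inNb (v x : {perm 'I_n}) : (x \in Nb v) <-> exists m, Rot v x m.
Proof. by rewrite NbE; apply: AGadjP. Qed.

Lemma inCN (v w x : {perm 'I_n}) : x \in Nb v :&: Nb w -> (exists m, Rot v x m) /\ (exists m, Rot w x m).
Proof. by case/setIP => /inNb H1 /inNb H2. Qed.

Lemma ge2_a (j : 'I_n) : 2 <= j -> j != a0. Proof. exact: big_a. Qed.
Lemma ge2_b (j : 'I_n) : 2 <= j -> j != b0. Proof. exact: big_b. Qed.

Lemma cn_struct (v w x : {perm 'I_n}) (m m' : 'I_n) : v != w -> ~~ AGadj v w -> Rot v x m -> Rot w x m' ->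
  [/\ m != m', v m != w m, w m = x m &
      forall j : 'I_n, j != a0 -> j != b0 -> j != m -> j != m' -> v j = w j].
Proof.
move=> vw nadj Hv Hw.
have Hm := Rot_ge2 Hv; have Hm' := Rot_ge2 Hw.
have mm' : m != m'.
  apply/eqP => E; subst m'.
  case: (rot_tri Hv Hw) => [E|R]; first by rewrite E eqxx in vw.
  by move/negP: nadj; apply; apply/AGadjP; exists m.
have wm : w m = x m by rewrite (rot_off Hw) // ?ge2_a ?ge2_b.
split => //.
- rewrite wm; apply/negP => /eqP E.
  case: (rot_at Hv) => E2; rewrite E2 in E; move/perm_inj: E => E.
    by move: (ge2_b Hm); rewrite E eqxx.
  by move: (ge2_a Hm); rewrite E eqxx.
- by move=> j ja jb jm jm'; rewrite -(rot_off Hv) // (rot_off Hw).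
Qed.

Lemma cn_det (v w x y : {perm 'I_n}) (m mx my : 'I_n) : v != w -> ~~ AGadj v w -> Rot v x m -> Rot w x mx ->
  Rot v y m -> Rot w y my -> x = y.
Proof.
move=> vw nadj Hx Hx' Hy Hy'.
case: (cn_struct vw nadj Hx Hx') => _ _ E1 _.
case: (cn_struct vw nadj Hy Hy') => _ _ E2 _.
by apply: (rot_det Hx Hy); rewrite -E1 -E2.
Qed.

Lemma cn_pos (v w x0 : {perm 'I_n}) (m0 m0' : 'I_n) (x : {perm 'I_n}) (m m' : 'I_n) : v != w -> ~~ AGadj v w -> Rot v x0 m0 -> Rot w x0 m0' ->
  Rot v x m -> Rot w x m' -> m = m0 \/ m = m0'.
Proof.
move=> vw nadj H0 H0' H H'.
case: (cn_struct vw nadj H H') => _ vm _ _.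
case: (cn_struct vw nadj H0 H0') => _ _ _ agr.
have Hm := Rot_ge2 H.
have [->|a1] := eqVneq m m0; first by left.
have [->|a2] := eqVneq m m0'; first by right.
by rewrite agr ?ge2_a ?ge2_b ?eqxx in vm.
Qed.

Lemma cn_le2 (v w : {perm 'I_n}) : v != w -> ~~ AGadj v w -> #|Nb v :&: Nb w| <= 2.
Proof.
move=> vw nadj; rewrite leqNgt; apply/negP => /card_gt2P [x [y [z [[xi yi zi] [xy yz zx]]]]].
case: (inCN xi) => [[mx Hx] [mx' Hx']].
case: (inCN yi) => [[my Hy] [my' Hy']].
case: (inCN zi) => [[mz Hz] [mz' Hz']].
have ymx : my != mx.
  apply/eqP => E; subst my; move/eqP: xy; apply.
  exact: (cn_det vw nadj Hx Hx' Hy Hy').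
have zmx : mz != mx.
  apply/eqP => E; subst mz; move/eqP: zx; apply.
  exact: (cn_det vw nadj Hz Hz' Hx Hx').
have e1 : my = mx' by case: (cn_pos vw nadj Hx Hx' Hy Hy') => // E; rewrite E eqxx in ymx.
have e2 : mz = mx' by case: (cn_pos vw nadj Hx Hx' Hz Hz') => // E; rewrite E eqxx in zmx.
subst my mz; move/eqP: yz; apply.
exact: (cn_det vw nadj Hy Hy' Hz Hz').
Qed.

Lemma cn2 (v w : {perm 'I_n}) : v != w -> ~~ AGadj v w -> 1 < #|Nb v :&: Nb w| ->
  exists (k l : 'I_n) (x1 x2 : {perm 'I_n}),
  [/\ 2 <= k, 2 <= l, k != l, w k = v a0 & w l = v b0] /\
   [/\ Rot v x1 k, Rot v x2 l, x1 \in Nb v :&: Nb w, x2 \in Nb v :&: Nb w &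
      (x1 k = v a0 /\ x2 l = v b0)] /\
  (forall j : 'I_n, j != a0 -> j != b0 -> j != k -> j != l -> v j = w j).
Proof.
move=> vw nadj /card_gt1P [x [y [xi yi xy]]].
case: (inCN xi) => [[mx Hx] [mx' Hx']].
case: (inCN yi) => [[my Hy] [my' Hy']].
have ymx : my != mx.
  apply/eqP => E; subst my; move/eqP: xy; apply.
  exact: (cn_det vw nadj Hx Hx' Hy Hy').
have e1 : my = mx' by case: (cn_pos vw nadj Hx Hx' Hy Hy') => // E; rewrite E eqxx in ymx.
subst my.
case: (cn_struct vw nadj Hx Hx') => mm _ wx agr.
case: (cn_struct vw nadj Hy Hy') => _ _ wy _.
have Hmx := Rot_ge2 Hx; have Hmy := Rot_ge2 Hy.
have wne : w mx != w mx' by apply/negP => /eqP /perm_inj E; rewrite E eqxx in mm.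
case: (rot_at Hx) => xa; case: (rot_at Hy) => ya.
- by rewrite wx wy xa ya eqxx in wne.
- exists mx', mx, y, x; split; first by split => //; rewrite 1?eq_sym // ?wx ?wy.
  split => //.
  by move=> j ja jb j1 j2; apply: agr.
- exists mx, mx', x, y; split; first by split => //; rewrite ?wx ?wy.
  by split.
- by rewrite wx wy xa ya eqxx in wne.
Qed.


Lemma LT (b c x : {perm 'I_n}) (m m' p p' L : 'I_n) : Rot b x m -> Rot c x m' ->
  b p = L -> c p' = L -> p != p' -> 2 <= p -> 2 <= p' -> m = p.
Proof.
move=> Hb' Hc bp cp pp' Hp Hp'.
apply/eqP; apply: contraT => mp.
have xp : x p = L by rewrite (rot_off Hb') ?ge2_a ?ge2_b // eq_sym.
have [E|mp'] := eqVneq m' p'.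
  subst m'; case: (rot_src Hc) => E; rewrite cp -xp in E; move/perm_inj: E => E.
    by move: (ge2_a Hp); rewrite E eqxx.
  by move: (ge2_b Hp); rewrite E eqxx.
have xp' : x p' = L by rewrite (rot_off Hc) ?ge2_a ?ge2_b // eq_sym.
by move: pp'; rewrite -xp' in xp; rewrite (perm_inj xp) eqxx.
Qed.

Lemma le1_letter (b c : {perm 'I_n}) (p p' L : 'I_n) : b != c -> ~~ AGadj b c ->
  b p = L -> c p' = L -> p != p' -> 2 <= p -> 2 <= p' -> #|Nb b :&: Nb c| <= 1.
Proof.
move=> bc nadj bp cp pp' Hp Hp'.
rewrite leqNgt; apply/negP => /card_gt1P [x [y [xi yi xy]]].
case: (inCN xi) => [[mx Hx] [mx' Hx']].
case: (inCN yi) => [[my Hy] [my' Hy']].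
have e1 := LT Hx Hx' bp cp pp' Hp Hp'.
have e2 := LT Hy Hy' bp cp pp' Hp Hp'.
subst mx my; move/eqP: xy; apply.
exact: (cn_det bc nadj Hx Hx' Hy Hy').
Qed.

Lemma empty_agree (b c : {perm 'I_n}) : b != c -> ~~ AGadj b c ->
  (forall j : 'I_n, j != a0 -> j != b0 -> b j = c j) -> #|Nb b :&: Nb c| = 0.
Proof.
move=> bc nadj agr; case: (posnP #|Nb b :&: Nb c|) => // /card_gt0P [x xi].
case: (inCN xi) => [[mx Hx] [mx' Hx']].
case: (cn_struct bc nadj Hx Hx') => _ H _ _.
have Hm := Rot_ge2 Hx.
by rewrite agr ?ge2_a ?ge2_b ?eqxx in H.
Qed.

Lemma two (a b c : {perm 'I_n}) : a != b -> a != c -> b != c ->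
  ~~ AGadj a b -> ~~ AGadj a c -> ~~ AGadj b c ->
  1 < #|Nb a :&: Nb b| -> 1 < #|Nb a :&: Nb c| ->
  #|Nb b :&: Nb c| <= 1 /\
  (0 < #|Nb b :&: Nb c| -> exists x, [/\ x \in Nb a, x \in Nb b & x \in Nb c]).
Proof.
move=> ab' ac bc nab nac nbc Hab Hac.
case: (cn2 ab' nab Hab) => kb [lb [xb1 [xb2 [[Hkb Hlb klb bk bl] [[Rb1 Rb2 ib1 ib2 [vb1 vb2]] agb]]]]].
case: (cn2 ac nac Hac) => kc [lc [xc1 [xc2 [[Hkc Hlc klc ck cl] [[Rc1 Rc2 ic1 ic2 [vc1 vc2]] agc]]]]].
have trip : kb = kc \/ lb = lc -> exists x, [/\ x \in Nb a, x \in Nb b & x \in Nb c].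
  case=> E; subst.
    have E1 : xb1 = xc1 by apply: (rot_det Rb1 Rc1); rewrite vb1 vc1.
    subst xb1.
    case/setIP: ib1 => i1 i2.
    case/setIP: ic1 => _ i3.
    exists xc1.
    split.
    exact: i1. exact: i2. exact: i3.
  have E1 : xb2 = xc2 by apply: (rot_det Rb2 Rc2); rewrite vb2 vc2.
  subst xb2.
  case/setIP: ib2 => i1 i2.
  case/setIP: ic2 => _ i3.
  exists xc2.
  split.
  exact: i1. exact: i2. exact: i3.
split; last first.
  move=> /card_gt0P [x xi].
  have [E|nk] := eqVneq kb kc; first by apply: trip; left.
  have [E|nl] := eqVneq lb lc; first by apply: trip; right.
  case: (inCN xi) => [[m Hx] [m' Hx']].
  have e1 := LT Hx Hx' bk ck nk Hkb Hkc.
  have e2 := LT Hx Hx' bl cl nl Hlb Hlc.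
  by move: klb; rewrite -e1 -e2 eqxx.
have [E|nk] := eqVneq kb kc; last exact: (le1_letter bc nbc bk ck nk Hkb Hkc).
have [E'|nl] := eqVneq lb lc; last exact: (le1_letter bc nbc bl cl nl Hlb Hlc).
subst kc lc.
rewrite (empty_agree bc nbc) // => j ja jb.
have [->|jk] := eqVneq j kb; first by rewrite bk ck.
have [->|jl] := eqVneq j lb; first by rewrite bl cl.
by rewrite -agb // agc.
Qed.


Lemma triple3 (a b c : {perm 'I_n}) : a != b -> a != c -> b != c ->
  ~~ AGadj a b -> ~~ AGadj a c -> ~~ AGadj b c ->
  ~~ AGadj b a -> ~~ AGadj c a -> ~~ AGadj c b ->
  #|Nb a| + #|Nb b| + #|Nb c| <= #|Nb a :|: Nb b :|: Nb c| + 4.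
Proof.
move=> ab' ac bc nab nac nbc nba nca ncb.
have ba' : b != a by rewrite eq_sym.
have ca : c != a by rewrite eq_sym.
have cb : c != b by rewrite eq_sym.
have IE := IE3 (Nb a) (Nb b) (Nb c).
have h1 := cn_le2 ab' nab; have h2 := cn_le2 ac nac; have h3 := cn_le2 bc nbc.
have tpos : (exists x, [/\ x \in Nb a, x \in Nb b & x \in Nb c]) -> 0 < #|Nb a :&: Nb b :&: Nb c|.
  case=> x [xa xb xc]; apply/card_gt0P; exists x.
  by apply/setIP; split; [apply/setIP; split|].
apply: (arith IE h1 h2 h3).
have [g1|l1] := ltnP 1 #|Nb a :&: Nb b|; have [g2|l2] := ltnP 1 #|Nb a :&: Nb c|.
- case: (two ab' ac bc nab nac nbc g1 g2) => le P.
  apply: (ar1 h1 h2 le) => /P; exact: tpos.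
- have [g3|l3] := ltnP 1 #|Nb b :&: Nb c|; last exact: (ar2a _ h1 l2 l3).
  have g1' := g1; rewrite setIC in g1'.
  case: (two ba' bc ac nba nbc nac g1' g3) => le P.
  rewrite addnAC; apply: (ar1 h1 h3 le) => /P [x [xb xa xc]]; apply: tpos; exists x; split; assumption.
- have [g3|l3] := ltnP 1 #|Nb b :&: Nb c|; last exact: (ar2b _ l1 h2 l3).
  have G2 := g2; have G3 := g3; rewrite setIC in G2; rewrite setIC in G3.
  case: (two ca cb ab' nca ncb nab G2 G3) => le P.
  apply: (ar1x le h2 h3) => /P [x [xc xa xb]]; apply: tpos; exists x; split; assumption.
- exact: (ar2 _ l1 l2 h3).
Qed.

Definition M2 : {set 'I_n} := [set m : 'I_n | 2 <= m].

Lemma cardM2 : #|M2| = n - 2.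
Proof.
have -> : M2 = ~: [set a0; b0].
  apply/setP => j; rewrite !inE negb_or.
  apply/idP/idP => [H|/andP [ja jb]]; first by rewrite ge2_a ?ge2_b.
  rewrite ltnNge; apply/negP => H.
  have Ha' : nat_of_ord a0 = 0 := Ha.
  have Hb' : nat_of_ord b0 = 1 := Hb.
  have : j = a0 \/ j = b0.
    have : nat_of_ord j = 0 \/ nat_of_ord j = 1 by lia.
    case=> E; [left|right]; apply: val_inj; rewrite /=; lia.
  by case=> E; [move: ja | move: jb]; rewrite E eqxx.
move: (cardsC [set a0; b0]); rewrite cards2 ab card_ord /= => E. set k := #|~: _| in E *. lia.
Qed.

Lemma cardNb (v : {perm 'I_n}) : #|Nb v| = 2 * (n - 2).
Proof.
have -> : Nb v = [set rotP v m | m in M2] :|: [set rotM v m | m in M2].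
  apply/setP => x; rewrite NbE; apply/idP/idP.
    case/AGadjP => m [Hm [->|->]]; rewrite inE; apply/orP; [left|right];
      by apply/imsetP; exists m; rewrite ?inE.
  case/setUP => /imsetP [m]; rewrite inE => Hm ->; apply/AGadjP; exists m; split => //; auto.
rewrite cardsU !card_in_imset ?cardM2.
- have -> : #|[set rotP v m | m in M2] :&: [set rotM v m | m in M2]| = 0.
    apply/eqP; rewrite cards_eq0; apply/eqP/setP => x; rewrite !inE.
    apply/negP => /andP [/imsetP [m]]; rewrite inE => Hm -> /imsetP [m']; rewrite inE => Hm' /(congr1 (fun f : {perm 'I_n} => f m)).
    rewrite (rotPm v Hm).
    have [E|mm] := eqVneq m m'.
      subst m'; rewrite (rotMm v Hm) => /perm_inj E; by move: ab; rewrite E eqxx.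
    rewrite (rotMo v) ?ge2_a ?ge2_b // => /perm_inj E; by move: (ge2_b Hm); rewrite E eqxx.
  lia.
- move=> m m'; rewrite !inE => Hm Hm' /(congr1 (fun f : {perm 'I_n} => f m)).
  rewrite (rotMm v Hm).
  have [//|mm] := eqVneq m m'.
  rewrite (rotMo v) ?ge2_a ?ge2_b // => /perm_inj E; by move: (ge2_a Hm); rewrite E eqxx.
- move=> m m'; rewrite !inE => Hm Hm' /(congr1 (fun f : {perm 'I_n} => f m)).
  rewrite (rotPm v Hm).
  have [//|mm] := eqVneq m m'.
  rewrite (rotPo v) ?ge2_a ?ge2_b // => /perm_inj E; by move: (ge2_b Hm); rewrite E eqxx.
Qed.


Lemma indP (S : {set {perm 'I_n}}) : AGindependent S ->
  forall p q, p \in S -> q \in S -> ~~ AGadj p q.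
Proof.
case/andP => _ /forallP H p q pS qS.
by move/implyP: (H p) => /(_ pS) /forallP /(_ q) /implyP /(_ qS).
Qed.

Lemma nbhd_mem (S : {set {perm 'I_n}}) x : AGindependent S ->
  (x \in AGnbhd S) = [exists v in S, x \in Nb v].
Proof.
move=> HS; have ind := indP HS; case/andP: HS => sub _.
rewrite /AGnbhd in_set; apply/idP/idP.
  case/andP => _ /andP [_ /existsP [v /andP [vS adj]]].
  by apply/existsP; exists v; rewrite vS NbE.
case/existsP => v /andP [vS]; rewrite NbE => adj.
have ev : v \in AGvert n by move/subsetP: sub; apply.
have xS : x \notin S.
  apply/negP => xS; move/negP: (ind v x vS xS); apply; exact: adj.
rewrite xS andTb; apply/andP; split.
  case/AGadjP: adj => m Rm; move: ev; rewrite !inE (rot_even Rm); exact: id.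
by apply/existsP; exists v; rewrite vS.
Qed.

End AG.

Lemma card3 (T : finType) (S : {set T}) : #|S| = 3 ->
  exists a b c, [/\ a != b, a != c, b != c & S = [set a; b; c]].
Proof.
move=> H; have : 2 < #|S| by rewrite H.
case/card_gt2P => a [b [c [[aS bS cS] [ab bc ca]]]].
exists a, b, c; split => //; first by rewrite eq_sym.
have sub : [set a; b; c] \subset S.
  by apply/subsetP => x; rewrite !inE; case/orP => [/orP [] |] /eqP ->.
have c3 : 2 < #|[set a; b; c]|.
  apply/card_gt2P; exists a, b, c; split; split => //; by rewrite !inE eqxx ?orbT.
by apply/esym/eqP; rewrite eqEcard sub H c3.
Qed.

Lemma card4 (T : finType) (S : {set T}) : #|S| = 4 ->
  exists a b c d, [/\ a != b, a != c, b != c & [/\ d != a, d != b, d != c &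
     S = d |: [set a; b; c]]].
Proof.
move=> H; have : 0 < #|S| by rewrite H.
case/card_gt0P => d dS.
have : #|S :\ d| = 3 by move: H; rewrite (cardsD1 d S) dS add1n => -[].
case/card3 => a [b [c [ab ac bc E]]].
have : a \in S :\ d by rewrite E !inE eqxx.
have : b \in S :\ d by rewrite E !inE eqxx orbT.
have : c \in S :\ d by rewrite E !inE eqxx !orbT.
rewrite !inE => /andP [cd _] /andP [bd _] /andP [ad _].
exists a, b, c, d; split => //; split; rewrite 1?eq_sym //.
by rewrite -E setD1K.
Qed.

Lemma avg4 (T : finType) (A B C D : {set T}) :
  #|A :|: B :|: C| + #|A :|: B :|: D| + #|A :|: C :|: D| + #|B :|: C :|: D| <=
  #|A| + #|B| + #|C| + #|D| + 2 * #|A :|: B :|: C :|: D|.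
Proof.
rewrite !cardsum big_distrr -!big_split /=; apply: leq_sum => x _; rewrite !inE.
by case: (x \in A); case: (x \in B); case: (x \in C); case: (x \in D).
Qed.

Lemma fin3 (n U A B C : nat) : 4 <= n -> A = 2 * (n - 2) -> B = 2 * (n - 2) -> C = 2 * (n - 2) ->
  A + B + C <= U + 4 -> 6 * n - 16 <= U.
Proof. lia. Qed.

Lemma fin4 (n U A B C D t1 t2 t3 t4 : nat) : 4 <= n -> A = 2 * (n - 2) -> B = 2 * (n - 2) ->
  C = 2 * (n - 2) -> D = 2 * (n - 2) ->
  A + B + C <= t1 + 4 -> A + B + D <= t2 + 4 -> A + C + D <= t3 + 4 -> B + C + D <= t4 + 4 ->
  t1 + t2 + t3 + t4 <= A + B + C + D + 2 * U -> 8 * n - 24 <= U.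
Proof. lia. Qed.

Lemma mem3 (T : finType) (a b c v : T) : v \in [set a; b; c] -> [\/ v = a, v = b | v = c].
Proof. by rewrite !inE => /orP [/orP [] |] /eqP ->; [constructor 1 | constructor 2 | constructor 3]. Qed.

Theorem lemma6 (n : nat) (S : {set {perm 'I_n}}) :
  4 <= n -> AGindependent S ->
  (#|S| = 3 -> 6 * n - 16 <= #|AGnbhd S|) /\
  (#|S| = 4 -> 8 * n - 24 <= #|AGnbhd S|).
Proof.
move=> n4 HS.
have n0 : 0 < n by apply: leq_trans n4.
have n1 : 1 < n by apply: leq_trans n4.
have Ha : val (Ordinal n0) = 0 by [].
have Hb : val (Ordinal n1) = 1 by [].
have ind := indP HS.
have cN := cardNb Ha Hb.
split.
  case/card3 => a [b [c [ab ac bc E]]].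
  have aS : a \in S by rewrite E !inE eqxx.
  have bS : b \in S by rewrite E !inE eqxx ?orbT.
  have cS : c \in S by rewrite E !inE eqxx ?orbT.
  have -> : AGnbhd S = Nb a :|: Nb b :|: Nb c.
    apply/setP => x; rewrite (nbhd_mem Ha Hb _ HS).
    apply/existsP/idP.
      case=> v /andP [vS xv]; move: vS; rewrite E => /mem3 [] Ev; subst v.
      - by apply/setUP; left; apply/setUP; left.
      - by apply/setUP; left; apply/setUP; right.
      - by apply/setUP; right.
    case/setUP => [/setUP [] |] H; [exists a | exists b | exists c]; apply/andP; split; assumption.
  have T := triple3 Ha Hb ab ac bc (ind _ _ aS bS) (ind _ _ aS cS) (ind _ _ bS cS)
    (ind _ _ bS aS) (ind _ _ cS aS) (ind _ _ cS bS).
  exact: (fin3 n4 (cN a) (cN b) (cN c) T).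
case/card4 => a [b [c [d [ab ac bc [da db dc E]]]]].
have aS : a \in S by rewrite E !inE eqxx ?orbT.
have bS : b \in S by rewrite E !inE eqxx ?orbT.
have cS : c \in S by rewrite E !inE eqxx ?orbT.
have dS : d \in S by rewrite E !inE eqxx ?orbT.
have ad : a != d by rewrite eq_sym.
have bd : b != d by rewrite eq_sym.
have cd : c != d by rewrite eq_sym.
have -> : AGnbhd S = Nb a :|: Nb b :|: Nb c :|: Nb d.
  apply/setP => x; rewrite (nbhd_mem Ha Hb _ HS).
  apply/existsP/idP.
    case=> v /andP [vS xv]; move: vS; rewrite E => /setU1P [Ev|/mem3 [] Ev]; subst v.
    - by apply/setUP; right.
    - by apply/setUP; left; apply/setUP; left; apply/setUP; left.
    - by apply/setUP; left; apply/setUP; left; apply/setUP; right.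
    - by apply/setUP; left; apply/setUP; right.
  case/setUP => [/setUP [/setUP [] |] |] H; [exists a | exists b | exists c | exists d];
    apply/andP; split; assumption.
have T1 := triple3 Ha Hb ab ac bc (ind _ _ aS bS) (ind _ _ aS cS) (ind _ _ bS cS)
    (ind _ _ bS aS) (ind _ _ cS aS) (ind _ _ cS bS).
have T2 := triple3 Ha Hb ab ad bd (ind _ _ aS bS) (ind _ _ aS dS) (ind _ _ bS dS)
    (ind _ _ bS aS) (ind _ _ dS aS) (ind _ _ dS bS).
have T3 := triple3 Ha Hb ac ad cd (ind _ _ aS cS) (ind _ _ aS dS) (ind _ _ cS dS)
    (ind _ _ cS aS) (ind _ _ dS aS) (ind _ _ dS cS).
have T4 := triple3 Ha Hb bc bd cd (ind _ _ bS cS) (ind _ _ bS dS) (ind _ _ cS dS)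
    (ind _ _ cS bS) (ind _ _ dS bS) (ind _ _ dS cS).
have Av := avg4 (Nb a) (Nb b) (Nb c) (Nb d).
exact: (fin4 n4 (cN a) (cN b) (cN c) (cN d) T1 T2 T3 T4 Av).
Qed.
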